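(* Let $(X,d)$ be a compact metric space and $\mathcal{W}$ a uniformly bounded open cover of $X$. If $U$ is an open subset of $X$, then $P_U$ is open in $\mathrm{Viet}^{\mathrm{m}}(\mathcal{W})$. If $\mathcal{U}=\{U_1,\dots,U_n\}$ is a collection of open subsets of $X$, then $P_{\mathcal{U}}$ is open in $\mathrm{Viet}^{\mathrm{m}}(\mathcal{W})$.
   Context: $\mathrm{Viet}^{\mathrm{m}}(\mathcal{W})$ is the set of finitely supported probability measures on $X$ whose support is contained in some element of $\mathcal{W}$, with the $1$-Wasserstein metric. For $U\subseteq X$, $P_U=\{\mu\in\mathrm{Viet}^{\mathrm{m}}(\mathcal{W}) : \mathrm{supp}(\mu)\cap U\neq\varnothing\}$, and for a finite collection $\mathcal{U}=\{U_1,\dots,U_n\}$, $P_{\mathcal{U}}=\bigcap_{i=1}^nP_{U_i}$. *)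

(* Defs.v *)
From mathcomp Require Import all_boot all_order all_algebra.
From mathcomp Require Import all_classical all_reals.
Set Implicit Arguments. Unset Strict Implicit. Unset Printing Implicit Defensive.
Import Order.TTheory GRing.Theory Num.Theory.
Local Open Scope classical_set_scope.
Local Open Scope ring_scope.

Section Defs.
Variables (R : realType) (X : choiceType) (d : X -> X -> R).

Definition is_metric : Prop :=
  [/\ forall x y, 0 <= d x y,
      forall x y, d x y = 0 <-> x = y,
      forall x y, d x y = d y x &
      forall x y z, d x z <= d x y + d y z].

Definition metric_open (U : set X) : Prop :=
  forall x, U x -> exists2 e : R, 0 < e & forall y, d x y < e -> U y.

Definition metric_compact : Prop :=
  forall C : set (set X),
    (forall A, C A -> metric_open A) ->
    (forall x, exists A, C A /\ A x) ->
    exists n (f : nat -> set X),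
      (forall i, (i < n)%N -> C (f i)) /\
      (forall x, exists i, (i < n)%N /\ f i x).

Definition open_cover (Wc : set (set X)) : Prop :=
  (forall W, Wc W -> metric_open W) /\ (forall x, exists W, Wc W /\ W x).

Definition uniformly_bounded (Wc : set (set X)) : Prop :=
  exists M : R, forall W, Wc W -> forall x y, W x -> W y -> d x y <= M.

(* finitely supported probability measures, given by their mass functions *)
Definition fin_prob (mu : X -> R) : Prop :=
  (forall x, 0 <= mu x) /\
  exists S : seq X, [/\ uniq S, (forall x, 0 < mu x -> x \in S) &
                        \sum_(x <- S) mu x = 1].

Definition supp (mu : X -> R) : set X := [set x | 0 < mu x].

Definition coupling (mu nu : X -> R) (pi : X -> X -> R) (S : seq X) : Prop :=
  [/\ uniq S, (forall x y, 0 <= pi x y),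
      (forall x y, pi x y != 0 -> x \in S /\ y \in S),
      (forall x, \sum_(y <- S) pi x y = mu x) &
      (forall y, \sum_(x <- S) pi x y = nu y)].

Definition transport_cost (pi : X -> X -> R) (S : seq X) : R :=
  \sum_(x <- S) \sum_(y <- S) pi x y * d x y.

Definition W1 (mu nu : X -> R) : R :=
  inf [set c | exists pi S, coupling mu nu pi S /\ c = transport_cost pi S].

Definition VietM (Wc : set (set X)) : set (X -> R) :=
  [set mu | fin_prob mu /\ exists2 W, Wc W & supp mu `<=` W].

Definition VietM_open (Wc : set (set X)) (A : set (X -> R)) : Prop :=
  A `<=` VietM Wc /\
  forall mu, A mu -> exists2 e : R, 0 < e &
    forall nu, VietM Wc nu -> W1 mu nu < e -> A nu.

Definition P_set (Wc : set (set X)) (U : set X) : set (X -> R) :=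
  [set mu | VietM Wc mu /\ supp mu `&` U !=set0].

Definition P_fam (Wc : set (set X)) (n : nat) (Us : 'I_n -> set X) :
  set (X -> R) :=
  [set mu | VietM Wc mu /\ forall i, P_set Wc (Us i) mu].

End Defs.

(* Main.v *)
Require Import Defs.
From mathcomp Require Import all_boot all_order all_algebra.
From mathcomp Require Import all_classical all_reals.
Import Order.TTheory GRing.Theory Num.Theory.
Local Open Scope classical_set_scope.
Local Open Scope ring_scope.

Section Helpers.
Variables (R : realType) (X : choiceType) (d : X -> X -> R).

Lemma sum_sub (f : X -> R) (Sn S : seq X) :
  (forall x, 0 <= f x) -> (forall x, 0 < f x -> x \in Sn) ->
  uniq Sn -> uniq S -> {subset Sn <= S} ->
  \sum_(x <- S) f x = \sum_(x <- Sn) f x.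
Proof.
move=> f0 fS uSn uS sub.
rewrite (bigID (fun x => x \in Sn)) /=.
rewrite [X in _ + X]big1 ?addr0; last first.
  move=> x /negP xn; apply/eqP; rewrite eq_le f0 andbT.
  by rewrite leNgt; apply/negP => /fS.
rewrite -big_filter; apply: perm_big.
apply: uniq_perm; first exact: filter_uniq.
  done.
by move=> x; rewrite mem_filter; case xn: (x \in Sn) => //=; rewrite sub.
Qed.

Lemma prod_coupling (mu nu : X -> R) : fin_prob mu -> fin_prob nu ->
  exists pi S, coupling mu nu pi S.
Proof.
move=> [m0 [Sm [uSm mS sm]]] [n0 [Sn [uSn nS sn]]].
exists (fun x y => mu x * nu y), (undup (Sm ++ Sn)).
split.
- exact: undup_uniq.
- by move=> x y; rewrite mulr_ge0.
- move=> x y; rewrite mulf_eq0 negb_or => /andP[mx ny].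
  rewrite !mem_undup !mem_cat; split.
  + by rewrite mS // lt_def mx m0.
  + by rewrite nS ?orbT // lt_def ny n0.
- move=> x; rewrite -big_distrr /= (@sum_sub nu Sn) ?sn ?mulr1 //.
    exact: undup_uniq.
  by move=> y yn; rewrite mem_undup mem_cat yn orbT.
- move=> y; rewrite -big_distrl /= (@sum_sub mu Sm) ?sm ?mul1r //.
    exact: undup_uniq.
  by move=> y' yn; rewrite mem_undup mem_cat yn.
Qed.

Lemma cost_lb (mu nu : X -> R) (x0 : X) (r : R) pi S :
  (forall x y, 0 <= d x y) -> 0 < mu x0 ->
  (forall y, 0 < nu y -> r <= d x0 y) ->
  coupling mu nu pi S -> mu x0 * r <= transport_cost d pi S.
Proof.
move=> d0 mx0 far [uS pi0 piS pmu pnu].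
have x0S : x0 \in S.
  apply/negPn/negP => x0n.
  move: mx0; rewrite -(pmu x0) big1 ?ltxx // => y _.
  apply/eqP/negPn/negP => /piS [] /[swap] _; by rewrite (negbTE x0n).
rewrite /transport_cost (bigD1_seq x0) //=.
rewrite -[X in X <= _]addr0; apply: lerD; last first.
  by rewrite sumr_ge0 // => x _; rewrite sumr_ge0 // => y _; rewrite mulr_ge0.
rewrite -(pmu x0) big_distrl /=; apply: ler_sum => y _.
have [->|pn] := eqVneq (pi x0 y) 0; first by rewrite !mul0r.
have pp : 0 < pi x0 y by rewrite lt_def pn pi0.
rewrite ler_wpM2l // far //.
rewrite -(pnu y) (bigD1_seq x0) //=.
apply: (lt_le_trans pp); rewrite lerDl sumr_ge0 // => x _.
Qed.

Lemma P_set_open (Wc : set (set X)) (U : set X) :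
  (forall x y, 0 <= d x y) -> metric_open d U -> VietM_open d Wc (P_set Wc U).
Proof.
move=> d0 oU; split; first by move=> mu [].
move=> mu [[fmu Wmu] [x0 [sx0 Ux0]]].
have [r r0 rU] := oU x0 Ux0.
exists (mu x0 * r); first by rewrite mulr_gt0.
move=> nu [fnu Wnu] Wl; split; first by [].
apply: contrapT => H.
have far : forall y, 0 < nu y -> r <= d x0 y.
  move=> y ny; rewrite leNgt; apply/negP => dy.
  by apply: H; exists y; split => //; apply: rU.
have : mu x0 * r <= W1 d mu nu.
  apply: lb_le_inf.
    have [pi [S c]] := @prod_coupling mu nu fmu fnu.
    by exists (transport_cost d pi S); exists pi, S.
  move=> c [pi [S [cp ->]]]; exact: cost_lb cp.
by rewrite leNgt Wl.
Qed.

End Helpers.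

Theorem proposition4p5 (R : realType) (X : choiceType) (d : X -> X -> R)
  (Wc : set (set X)) :
  is_metric d -> metric_compact d ->
  open_cover d Wc -> uniformly_bounded d Wc ->
  (forall U : set X, metric_open d U -> VietM_open d Wc (P_set Wc U)) /\
  (forall (n : nat) (Us : 'I_n -> set X),
      (forall i, metric_open d (Us i)) -> VietM_open d Wc (P_fam Wc Us)).
Proof.
move=> [d0 _ _ _] _ _ _.
have P1 := fun U => @P_set_open R X d Wc U d0.
split; first exact: P1.
move=> n Us oUs; split; first by move=> mu [].
move=> mu [Vmu Pmu].
have : forall i, exists e : R, 0 < e /\
    forall nu, VietM Wc nu -> W1 d mu nu < e -> P_set Wc (Us i) nu.
  move=> i; have [_ h] := P1 _ (oUs i).
  by have [e e0 he] := h mu (Pmu i); exists e.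
move=> /choice [f hf].
exists (\big[Order.min/1]_(i < n) f i).
  by apply: lt_bigmin => // i _; case: (hf i).
move=> nu Vnu Wl; split => // i.
case: (hf i) => _; apply => //.
by apply: (lt_le_trans Wl); apply: bigmin_le.
Qed.
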